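(* Let $n\ge3$, $1<k<n/2$, $p>\frac{nk}{n-2k}$, and let $u$ be a regular solution of (1.6). If $u(r)=O(r^{-\frac{2k}{p-k}-\varepsilon})$ as $r\to\infty$ for some $\varepsilon\in\big(0,\frac{n-2k}{k}-\frac{2k}{p-k}\big)$, then $u(r)=O(r^{\frac{2k-n}{k}})$ as $r\to\infty$.
   Context: Problem (1.6) is: given $\rho>0$, find $u$ with $-\tfrac{1}{k}C_{n-1}^{k-1}(r^{n-k}|u'|^{k-1}u')'=r^{n-1}u^{p}$, $u(r)>0$ for all $r>0$, $u'(0)=0$, $u(0)=\rho$, where $C_{n-1}^{k-1}$ is the binomial coefficient. A solution $u$ of (1.6) is regular if $x\mapsto u(|x|)$ belongs to $C^2(\mathbb{R}^n)$. *)

(* Defs.v *)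
From Stdlib Require Import Reals Lra Lia.
Open Scope R_scope.

(* Points of R^n are represented as x : nat -> R, of which only the
   coordinates 0 .. n-1 are used. *)
Fixpoint sumsq (n : nat) (x : nat -> R) : R :=
  match n with
  | O => 0
  | S m => sumsq m x + (x m) ^ 2
  end.

Definition vnorm (n : nat) (x : nat -> R) : R := sqrt (sumsq n x).

Definition upd (x : nat -> R) (i : nat) (t : R) : nat -> R :=
  fun j => if Nat.eqb j i then t else x j.

Definition has_partial (f : (nat -> R) -> R) (i : nat) (x : nat -> R) (l : R) : Prop :=
  derivable_pt_lim (fun t => f (upd x i t)) (x i) l.

Definition cont_Rn (n : nat) (g : (nat -> R) -> R) : Prop :=
  forall x eps, 0 < eps -> exists delta, 0 < delta /\
    forall y, vnorm n (fun j => y j - x j) < delta -> Rabs (g y - g x) < eps.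

Definition C2_Rn (n : nat) (f : (nat -> R) -> R) : Prop :=
  cont_Rn n f /\
  exists (D : nat -> (nat -> R) -> R) (D2 : nat -> nat -> (nat -> R) -> R),
    forall i j, (i < n)%nat -> (j < n)%nat ->
      (forall x, has_partial f i x (D i x)) /\
      (forall x, has_partial (D i) j x (D2 i j x)) /\
      cont_Rn n (D i) /\ cont_Rn n (D2 i j).

(* u solves problem (1.6) with parameters n, k, p and initial value rho:
   -(1/k) C_{n-1}^{k-1} (r^{n-k} |u'|^{k-1} u')' = r^{n-1} u^p  for r > 0,
   u(r) > 0 for r > 0, u'(0) = 0 (right derivative), u(0) = rho. *)
Definition solves_1_6 (n k : nat) (p rho : R) (u : R -> R) : Prop :=
  (forall r, 0 < r -> 0 < u r) /\
  u 0 = rho /\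
  (forall eps, 0 < eps -> exists delta, 0 < delta /\
     forall h, 0 < h < delta -> Rabs ((u h - u 0) / h) < eps) /\
  exists du : R -> R,
    (forall r, 0 < r -> derivable_pt_lim u r (du r)) /\
    (forall r, 0 < r -> exists l,
       derivable_pt_lim (fun s => s ^ (n - k) * (Rabs (du s)) ^ (k - 1) * du s) r l /\
       - (1 / INR k) * C (n - 1) (k - 1) * l = r ^ (n - 1) * Rpower (u r) p).

Definition regular_solution (n k : nat) (p rho : R) (u : R -> R) : Prop :=
  solves_1_6 n k p rho u /\ C2_Rn n (fun x => u (vnorm n x)).

Definition bigO_infty (f : R -> R) (a : R) : Prop :=
  exists M R0, forall r, R0 < r -> Rabs (f r) <= M * Rpower r a.

(* Main.v *)
Require Import Defs.
From Stdlib Require Import Reals Lra Lia.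
Open Scope R_scope.

Lemma Rpower_pos x y : 0 < Rpower x y.
Proof. unfold Rpower; apply exp_pos. Qed.

Lemma Rpower_ge1 r e : 1 <= r -> 0 <= e -> 1 <= Rpower r e.
Proof. intros. rewrite <- (Rpower_O r) by lra. apply Rle_Rpower; lra. Qed.

Lemma Rpower_le1 r e : 1 <= r -> e <= 0 -> Rpower r e <= 1.
Proof. intros. rewrite <- (Rpower_O r) by lra. apply Rle_Rpower; lra. Qed.

Lemma mono (f f' : R -> R) a :
  0 < a ->
  (forall x, a <= x -> derivable_pt_lim f x (f' x)) ->
  (forall x, a <= x -> 0 <= f' x) ->
  forall x y, a <= x -> x <= y -> f x <= f y.
Proof.
  intros Ha Hd Hp x y Hx Hxy.
  destruct (Req_dec x y) as [->|Hne]; [lra|].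
  destruct (MVT_cor2 f f' x y) as [c [Hc1 Hc2]]; [lra| |].
  - intros c Hc; apply Hd; lra.
  - assert (0 <= f' c) by (apply Hp; lra).
    assert (0 <= f' c * (y - x)) by (apply Rmult_le_pos; lra). lra.
Qed.

Lemma dpl_plus (f g : R -> R) x l1 l2 :
  derivable_pt_lim f x l1 -> derivable_pt_lim g x l2 ->
  derivable_pt_lim (fun s => f s + g s) x (l1 + l2).
Proof. intros; apply (derivable_pt_lim_plus f g); auto. Qed.

Lemma dpl_scal (f : R -> R) a x l :
  derivable_pt_lim f x l -> derivable_pt_lim (fun s => a * f s) x (a * l).
Proof. intros; apply (derivable_pt_lim_scal f a); auto. Qed.

Lemma dpl_eq (f : R -> R) x l l' : derivable_pt_lim f x l -> l = l' -> derivable_pt_lim f x l'.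
Proof. intros H ->; exact H. Qed.

Lemma large_small (M b eta r : R) : 0 < M -> b < 0 -> 0 < eta -> 0 < r ->
  exists s, r <= s /\ M * Rpower s b < eta.
Proof.
  intros HM Hb He Hr.
  set (T := Rmax (ln r) (ln (eta / M) / b) + 1).
  exists (exp T). split.
  - rewrite <- (exp_ln r) at 1 by lra. apply Rlt_le, exp_increasing.
    unfold T; pose proof (Rmax_l (ln r) (ln (eta / M) / b)); lra.
  - unfold Rpower. rewrite ln_exp.
    assert (HT : ln (eta / M) / b < T) by (unfold T; pose proof (Rmax_r (ln r) (ln (eta / M) / b)); lra).
    assert (b * T < ln (eta / M)).
    { assert (ln (eta/M) = b * (ln (eta / M) / b)) by (field; lra).
      rewrite H. apply Rmult_lt_gt_compat_neg_l; lra. }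
    assert (exp (b * T) < eta / M).
    { rewrite <- (exp_ln (eta / M)). apply exp_increasing; lra.
      apply Rdiv_lt_0_compat; lra. }
    apply (Rmult_lt_compat_l M) in H0; [|lra].
    replace (M * (eta / M)) with eta in H0 by (field; lra). lra.
Qed.

Lemma pow_pred_l x k : (1 <= k)%nat -> x ^ k = x ^ (k-1) * x.
Proof. intros. destruct k; [lia|]. simpl. rewrite Nat.sub_0_r. ring. Qed.

Lemma step (n k : nat) (p c : R) (u du : R -> R) (b M R0 d : R) :
  (1 <= k)%nat -> (k <= n)%nat -> 0 < p -> 0 < c ->
  (forall r, 0 < r -> 0 < u r) ->
  (forall r, 0 < r -> derivable_pt_lim u r (du r)) ->
  (forall r, 0 < r -> derivable_pt_lim (fun s => s^(n-k) * Rabs (du s)^(k-1) * du s) r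
                        (- c * (r^(n-1) * Rpower (u r) p))) ->
  1 <= R0 -> 0 < M -> b < 0 ->
  (forall r, R0 <= r -> u r <= M * Rpower r b) ->
  INR n + p*b <> 0 ->
  d = (Rmax (INR n + p*b) 0 - INR n + 2*INR k)/INR k -> d < 0 ->
  exists M', 0 < M' /\ forall r, R0 <= r -> u r <= M' * Rpower r d.
Proof.
  intros Hk1 Hkn Hp Hc Hu Hdu HW HR0 HM Hb Hbnd He Hd Hdneg.
  set (e := INR n + p*b) in *.
  set (Mp := Rpower M p).
  set (W := fun s => s^(n-k) * Rabs (du s)^(k-1) * du s) in *.
  assert (Hk : 0 < INR k) by (apply lt_0_INR; lia).
  assert (HMp : 0 < Mp) by apply Rpower_pos.
  assert (bnd : forall r, R0 <= r -> r^(n-1) * Rpower (u r) p <= Mp * Rpower r (e-1)).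
  { intros r Hr.
    rewrite <- (Rpower_pow (n-1) r) by lra. rewrite minus_INR by lia.
    assert (H1 : Rpower (u r) p <= Rpower (M * Rpower r b) p).
    { apply Rle_Rpower_l; [lra|]. split; [apply Hu; lra| apply Hbnd; lra]. }
    rewrite <- Rpower_mult_distr in H1 by (try lra; apply Rpower_pos).
    rewrite Rpower_mult in H1. fold Mp in H1.
    replace (e-1) with ((INR n - INR 1) + b*p) by (unfold e; simpl; ring).
    rewrite Rpower_plus.
    pose proof (Rpower_pos r (INR n - INR 1)).
    replace (Mp * (Rpower r (INR n - INR 1) * Rpower r (b * p))) with
      (Rpower r (INR n - INR 1) * (Mp * Rpower r (b * p))) by ring.
    apply Rmult_le_compat_l; lra. }
  assert (Wdec : forall r, R0 <= r -> W r <= W R0).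
  { intros r Hr.
    assert (H := mono (fun s => - W s) (fun s => c * (s^(n-1) * Rpower (u s) p)) R0
                  ltac:(lra)).
    assert (- W R0 <= - W r); [|lra].
    apply H; try lra.
    - intros x Hx. apply dpl_eq with (- (- c * (x^(n-1) * Rpower (u x) p))); [|ring].
      apply (derivable_pt_lim_opp W). apply HW; lra.
    - intros x Hx. pose proof (pow_lt x (n-1) ltac:(lra)).
      pose proof (Rpower_pos (u x) p).
      apply Rmult_le_pos; [lra|]. apply Rmult_le_pos; lra. }
  set (G := fun s => W s + (c*Mp/e) * Rpower s e).
  assert (Ginc : forall r, R0 <= r -> G R0 <= G r).
  { intros r Hr.
    apply (mono G (fun s => - c * (s^(n-1) * Rpower (u s) p) + (c*Mp/e)*(e*Rpower s (e-1))) R0);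
      try lra.
    - intros x Hx. unfold G. apply dpl_plus. apply HW; lra.
      apply dpl_scal. apply derivable_pt_lim_power; lra.
    - intros x Hx.
      replace ((c*Mp/e)*(e*Rpower x (e-1))) with (c * (Mp * Rpower x (e-1))) by (field; auto).
      pose proof (bnd x Hx). nra. }
  set (A := Rabs (W R0) + Rabs (G R0)).
  set (K := A + c*Mp/Rabs e + 1).
  set (E := Rmax e 0).
  assert (HA : 0 <= A) by (unfold A; pose proof (Rabs_pos (W R0)); pose proof (Rabs_pos (G R0)); lra).
  assert (HBp : 0 < c*Mp/Rabs e).
  { apply Rdiv_lt_0_compat. nra. apply Rabs_pos_lt; auto. }
  assert (HK : 0 < K) by (unfold K; lra).
  assert (HWb : forall r, R0 <= r -> Rabs (W r) <= K * Rpower r E).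
  { intros r Hr. pose proof (Wdec r Hr). pose proof (Ginc r Hr).
    assert (HGr : G r = W r + c*Mp/e*Rpower r e) by reflexivity.
    pose proof (Rle_abs (W R0)). pose proof (Rle_abs (- G R0)). rewrite Rabs_Ropp in H2.
    unfold E. destruct (Rle_or_lt e 0) as [He0|He0].
    - rewrite Rmax_right by lra. rewrite Rpower_O by lra.
      assert (c*Mp/e * Rpower r e < 0).
      { pose proof (Rpower_pos r e). unfold Rdiv.
        assert (/ e < 0) by (apply Rinv_lt_0_compat; lra).
        assert (0 < c*Mp) by (apply Rmult_lt_0_compat; lra).
        assert (c*Mp * / e < 0) by nra. nra. }
      apply Rabs_le. unfold K, A. pose proof (Rabs_pos (W R0)); pose proof (Rabs_pos (G R0)); lra.
    - rewrite Rmax_left by lra.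
      assert (Hae : Rabs e = e) by (apply Rabs_pos_eq; lra). rewrite Hae in HBp.
      pose proof (Rpower_ge1 r e ltac:(lra) ltac:(lra)).
      set (X := Rpower r e) in *.
      assert (A <= A * X) by nra.
      assert (K * X = A * X + c*Mp/e * X + X) by (unfold K; rewrite Hae; ring).
      assert (HA1 : - G R0 <= A) by (unfold A; pose proof (Rabs_pos (W R0)); pose proof (Rabs_pos (G R0)); lra).
      assert (HA2 : W R0 <= A) by (unfold A; pose proof (Rabs_pos (W R0)); pose proof (Rabs_pos (G R0)); lra).
      assert (0 <= c*Mp/e*X) by (apply Rmult_le_pos; lra).
      apply Rabs_le. split; lra. }
  assert (Habs : forall r, 0 < r -> Rabs (W r) = r^(n-k) * Rabs (du r)^k).
  { intros r Hr. unfold W. rewrite !Rabs_mult. rewrite <- !RPow_abs.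
    rewrite (Rabs_pos_eq r) by lra. rewrite Rabs_Rabsolu.
    rewrite (pow_pred_l (Rabs (du r)) k Hk1). ring. }
  set (D1 := (E - INR n + INR k)/INR k).
  set (K' := Rpower K (/INR k)).
  assert (HK' : 0 < K') by apply Rpower_pos.
  assert (HD : forall r, R0 <= r -> Rabs (du r) <= K' * Rpower r D1).
  { intros r Hr. destruct (Rle_or_lt (Rabs (du r)) (K' * Rpower r D1)) as [H|H]; auto.
    exfalso.
    assert (HY : 0 < K' * Rpower r D1) by (pose proof (Rpower_pos r D1); nra).
    assert (H1 := Rlt_Rpower_l _ _ (INR k) Hk (conj HY H)).
    rewrite (Rpower_pow k (Rabs (du r))) in H1 by lra.
    rewrite <- (Rpower_mult_distr K' (Rpower r D1)) in H1 by (auto; apply Rpower_pos).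
    unfold K' in H1. rewrite !Rpower_mult in H1.
    replace (/ INR k * INR k) with 1 in H1 by (field; lra).
    rewrite Rpower_1 in H1 by lra.
    replace (D1 * INR k) with (E - INR n + INR k) in H1 by (unfold D1; field; lra).
    pose proof (HWb r Hr). rewrite Habs in H0 by lra.
    rewrite <- (Rpower_pow (n-k) r) in H0 by lra. rewrite minus_INR in H0 by lia.
    replace (Rpower r E) with (Rpower r ((INR n - INR k) + (E - INR n + INR k))) in H0 by (f_equal; ring).
    rewrite Rpower_plus in H0.
    pose proof (Rpower_pos r (INR n - INR k)). nra. }
  assert (Hd1 : d - 1 = D1) by (rewrite Hd; unfold D1, E, e; field; lra).
  set (h := fun s => u s + (K'/d) * Rpower s d).
  assert (Hinc : forall x y, R0 <= x -> x <= y -> h x <= h y).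
  { apply (mono h (fun s => du s + (K'/d)*(d*Rpower s (d-1))) R0); try lra.
    - intros x Hx. unfold h. apply dpl_plus. apply Hdu; lra.
      apply dpl_scal. apply derivable_pt_lim_power; lra.
    - intros x Hx. rewrite Hd1.
      replace ((K'/d)*(d*Rpower x D1)) with (K' * Rpower x D1) by (field; lra).
      pose proof (HD x Hx). pose proof (Rle_abs (- du x)). rewrite Rabs_Ropp in H0. lra. }
  assert (HKd : K'/d < 0).
  { unfold Rdiv. assert (/ d < 0) by (apply Rinv_lt_0_compat; lra). nra. }
  exists (- (K'/d)). split; [lra|].
  intros r Hr.
  destruct (Rle_or_lt (h r) 0) as [H|H].
  - unfold h in H. lra.
  - exfalso.
    destruct (large_small M b (h r) r HM Hb H ltac:(lra)) as [s [Hs1 Hs2]].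
    pose proof (Hinc r s Hr Hs1).
    pose proof (Hbnd s ltac:(lra)).
    unfold h in H0 at 2. pose proof (Rpower_pos s d).
    assert (K'/d * Rpower s d < 0) by nra. lra.
Qed.

Theorem lemma2p2 (n k : nat) (p rho eps : R) (u : R -> R) :
  (3 <= n)%nat -> (1 < k)%nat -> INR k < INR n / 2 ->
  p > INR n * INR k / (INR n - 2 * INR k) ->
  0 < rho ->
  regular_solution n k p rho u ->
  0 < eps -> eps < (INR n - 2 * INR k) / INR k - 2 * INR k / (p - INR k) ->
  bigO_infty u (- (2 * INR k / (p - INR k)) - eps) ->
  bigO_infty u ((2 * INR k - INR n) / INR k).
Proof.
  intros Hn Hk1 Hkn2 Hp Hrho Hreg Heps Heps2 Hbig.
  destruct Hreg as [[Hpos [_ [_ [du [Hdu Hl]]]]] _].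
  set (kR := INR k) in *. set (nR := INR n) in *.
  assert (Hk : 1 < kR) by (unfold kR; apply lt_1_INR; lia).
  assert (Hn2 : 0 < nR - 2*kR) by lra.
  assert (Hkn : (k <= n)%nat) by (apply INR_le; fold kR nR; lra).
  assert (HpQ : nR * kR < p * (nR - 2*kR)).
  { apply (Rmult_lt_compat_r (nR - 2*kR)) in Hp; [|lra].
    replace (nR * kR / (nR - 2 * kR) * (nR - 2 * kR)) with (nR*kR) in Hp by (field; lra). lra. }
  assert (Hpk : kR < p) by nra.
  assert (HCp : 0 < C (n-1) (k-1)).
  { unfold C. apply Rdiv_lt_0_compat. apply INR_fact_lt_0.
    apply Rmult_lt_0_compat; apply INR_fact_lt_0. }
  set (c := kR / C (n-1) (k-1)).
  assert (Hc : 0 < c) by (unfold c; apply Rdiv_lt_0_compat; lra).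
  assert (HW : forall r, 0 < r -> derivable_pt_lim (fun s => s^(n-k) * Rabs (du s)^(k-1) * du s) r
                        (- c * (r^(n-1) * Rpower (u r) p))).
  { intros r Hr. destruct (Hl r Hr) as [l [Hd Heq]]. apply dpl_eq with l; auto.
    rewrite <- Heq. unfold c. field. split; lra. }
  set (good := fun b => exists M R0, 1 <= R0 /\ 0 < M /\ forall r, R0 <= r -> u r <= M * Rpower r b).
  assert (weak : forall b b', good b -> b <= b' -> good b').
  { intros b b' [M [R0 [H1 [H2 H3]]]] Hbb. exists M, R0. split; [|split]; auto.
    intros r Hr. pose proof (H3 r Hr). pose proof (Rle_Rpower r b b' ltac:(lra) Hbb). nra. }
  assert (stepg : forall b d, good b -> b < 0 -> nR + p*b <> 0 ->
            d = (Rmax (nR + p*b) 0 - nR + 2*kR)/kR -> d < 0 -> good d).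
  { intros b d [M [R0 [H1 [H2 H3]]]] Hb He Hd Hdn.
    destruct (step n k p c u du b M R0 d ltac:(lia) Hkn ltac:(lra) Hc Hpos Hdu HW H1 H2 Hb H3 He Hd Hdn)
      as [M' [HM' HM'b]].
    exists M', R0. auto. }
  set (a := (2 * kR - nR) / kR).
  assert (Ha : a < 0).
  { assert (a*kR = 2*kR - nR) by (unfold a; field; lra). nra. }
  assert (Hp0 : 0 < p) by lra.
  assert (base : forall b, good b -> b + nR/p <= 0 -> good a).
  { intros b Hg Hb.
    set (Q := p*(nR-2*kR) - nR*kR).
    assert (HQ : 0 < Q) by (unfold Q; lra).
    set (X := Rmin (nR - 2*kR) (Q/p)).
    assert (HX : 0 < X) by (unfold X; apply Rmin_glb_lt; [lra| apply Rdiv_lt_0_compat; lra]).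
    assert (HX1 : X <= nR - 2*kR) by apply Rmin_l.
    assert (HX2 : p * X <= Q).
    { assert (X <= Q/p) by apply Rmin_r. apply (Rmult_le_compat_l p) in H; [|lra].
      replace (p * (Q/p)) with Q in H by (field; lra). lra. }
    set (b1 := (-nR + X/2)/p).
    assert (Hb1p : p * b1 = -nR + X/2) by (unfold b1; field; lra).
    assert (Hbb1 : b <= b1).
    { assert (p*b + nR <= 0).
      { assert (p * (b + nR/p) <= 0) by nra.
        replace (p * (b + nR/p)) with (p*b + nR) in H by (field; lra). lra. }
      nra. }
    assert (Hb10 : b1 < 0) by nra.
    set (d1 := (X/2 - nR + 2*kR)/kR).
    assert (Hd1k : d1 * kR = X/2 - nR + 2*kR) by (unfold d1; field; lra).
    assert (Hd10 : d1 < 0) by nra.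
    assert (Hg1 : good d1).
    { apply (stepg b1 d1); [apply (weak b b1); auto| auto | lra | | auto].
      rewrite Hb1p. rewrite Rmax_left by lra. unfold d1. f_equal. ring. }
    assert (He2 : nR + p*d1 < 0).
    { assert (kR * (nR + p*d1) < 0).
      { replace (kR * (nR + p*d1)) with (nR*kR + p*(d1*kR)) by ring. rewrite Hd1k.
        unfold Q in HX2. nra. }
      nra. }
    apply (stepg d1 a); auto; try lra.
    rewrite Rmax_right by lra. unfold a. f_equal. ring. }
  set (bs := - (2 * kR / (p - kR))).
  assert (Hbs : bs * (p - kR) = - 2 * kR) by (unfold bs; field; lra).
  assert (Hbs0 : bs < 0) by nra.
  set (g := (p - kR) * eps / kR).
  assert (Hg0 : 0 < g) by (unfold g; apply Rdiv_lt_0_compat; nra).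
  assert (iter : forall N b, b <= bs - eps -> b + nR/p <= INR N * g -> good b -> good a).
  { induction N as [|N IH]; intros b Hb1 Hb2 Hgb.
    - simpl in Hb2. apply (base b); [auto|lra].
    - destruct (Rle_or_lt (b + nR/p) 0) as [H0|H0]; [apply (base b); auto|].
      assert (He : 0 < nR + p*b).
      { assert (0 < p * (b + nR/p)) by nra.
        replace (p * (b + nR/p)) with (p*b + nR) in H by (field; lra). lra. }
      set (d := (p*b + 2*kR)/kR).
      assert (Hdb : (d - b + g) * kR = (p - kR) * (b - bs + eps)).
      { replace ((d - b + g)*kR) with (p*b + 2*kR - b*kR + (p-kR)*eps) by (unfold d, g; field; lra).
        replace ((p - kR) * (b - bs + eps)) with ((p-kR)*b - bs*(p-kR) + (p-kR)*eps) by ring.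
        rewrite Hbs. ring. }
      assert (Hdb2 : d <= b - g).
      { assert ((p - kR) * (b - bs + eps) <= 0) by nra. nra. }
      assert (Hgd : good d).
      { apply (stepg b d); auto; try lra.
        rewrite Rmax_left by lra. unfold d. f_equal. ring. }
      apply (IH d); auto; try lra.
      rewrite S_INR in Hb2. lra. }
  set (b0 := - (2 * kR / (p - kR)) - eps).
  assert (Hg0b : good b0).
  { destruct Hbig as [M [R0 HM]].
    set (R1 := Rmax 1 (R0 + 1)).
    assert (HR1 : 1 <= R1) by apply Rmax_l.
    assert (HR1' : R0 + 1 <= R1) by apply Rmax_r.
    exists M, R1. split; [auto|split].
    - pose proof (HM R1 ltac:(lra)). pose proof (Hpos R1 ltac:(lra)).
      rewrite Rabs_pos_eq in H by lra. pose proof (Rpower_pos R1 b0).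
      fold b0 in H. nra.
    - intros r Hr. pose proof (HM r ltac:(lra)). pose proof (Hpos r ltac:(lra)).
      rewrite Rabs_pos_eq in H by lra. exact H. }
  destruct (INR_archimed g (b0 + nR/p) Hg0) as [N HN].
  assert (Hga : good a) by (apply (iter N b0); [unfold b0, bs; lra | lra | exact Hg0b]).
  destruct Hga as [M [R0 [H1 [H2 H3]]]].
  exists M, R0. intros r Hr. rewrite Rabs_pos_eq by (apply Rlt_le, Hpos; lra).
  apply H3; lra.
Qed.
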